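(* Fix a formula $A$. For all annotated unary contexts $\Gamma\{-\}$, $\Delta\{-\}$ and every finite set of formulas $\Sigma$: if $\vdash^A \Gamma\{\Delta\{\Diamond A^\perp_\Sigma\}\}$, then $\vdash^A \Gamma\{\Delta\{\},\Diamond A^\perp_\Sigma\}$.
   Context: Formulas: over a countable set of atoms $\alpha$ with duals $\alpha^\perp$, $A,B ::= \alpha \mid \alpha^\perp \mid A\land B \mid A\lor B \mid \Box A \mid \Diamond A$; negation $A^\perp$ by De Morgan duality ($(\alpha)^\perp=\alpha^\perp$, $(\alpha^\perp)^\perp=\alpha$, $\land/\lor$ dual, $(\Box A)^\perp=\Diamond A^\perp$, $(\Diamond A)^\perp=\Box A^\perp$). Annotated sequents: $\Gamma,\Delta ::= \cdot \mid \Gamma, C \mid \Gamma, \Diamond A_\Sigma \mid \Gamma,[\Delta]_B$, where $C$ is a formula not of the form $\Diamond A$, $\Sigma$ is a finite set of formulas (annotation set) and $B$ a formula (bracket annotation); sequents are taken up to exchange. Annotated unary contexts $\Gamma\{-\}$ (one hole) are defined analogously, $\Gamma\{\Delta\}$ is hole-filling, $\Gamma\{\}=\Gamma\{\cdot\}$. Annotated rules (whenever an active formula in a premise is a $\Diamond$-formula, its annotation is simply discarded): (id) $\Gamma\{\alpha^\perp,\alpha\}$, provided every $\Diamond$-formula occurrence in it has annotation $\emptyset$; ($\land$) from $\Gamma_1\{A\}$ and $\Gamma_2\{B\}$ infer $\Gamma\{A\land B\}$; ($\lor$) from $\Gamma\{A,B\}$ infer $\Gamma\{A\lor B\}$; ($\Box$)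 from $\Gamma\{[\Diamond A^\perp_\Sigma, A]_A\}$ infer $\Gamma\{\Box A\}$; ($\Diamond$) from $\Gamma\{\Delta\{[\Delta',A]_B\},\Diamond A_\Sigma\}$ infer $\Gamma\{\Delta\{[\Delta']_B\},\Diamond A_{\Sigma\cup\{B\}}\}$ (for any unary context $\Delta\{-\}$, possibly of depth $0$); (cut) from $\Gamma_1\{A\}$ and $\Gamma_2\{A^\perp\}$ infer $\Gamma\{\}$. In the two-premise rules, $\Gamma_1\{-\},\Gamma_2\{-\},\Gamma\{-\}$ are identical except for annotation sets of $\Diamond$-formula occurrences (bracket annotations coincide), and each $\Diamond$-formula occurrence in $\Gamma\{-\}$ has as annotation the union of the annotations of the corresponding occurrences in $\Gamma_1,\Gamma_2$. Fix a formula $A$; $\vdash^A\Gamma$ means the annotated sequent $\Gamma$ is derivable with the annotated rules (id), ($\land$), ($\lor$), ($\Box$), ($\Diamond$) together with those instances of (cut) whose cut formula is $A$ (premises $\Gamma_1\{A\}$, $\Gamma_2\{A^\perp\}$). Convention: annotations not displayed in a statement (on $\Diamond$-formulas or brackets of contexts) are arbitrary; bracket annotations are the same in hypothesis and conclusion, while undisplayed $\Diamond$-annotations in the conclusion are existentially quantified. *)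

(* Defs.v *)
From HB Require Import structures.
From mathcomp Require Import all_boot.
From mathcomp Require Import finmap.
From Stdlib Require Permutation.

Set Implicit Arguments.
Unset Strict Implicit.
Unset Printing Implicit Defensive.

Local Open Scope fset_scope.

Inductive form : Type :=
| Atom of nat
| NAtom of nat
| And of form & form
| Or of form & form
| Box of form
| Dia of form.

Fixpoint neg (f : form) : form :=
  match f with
  | Atom n => NAtom n
  | NAtom n => Atom n
  | And a b => Or (neg a) (neg b)
  | Or a b => And (neg a) (neg b)
  | Box a => Dia (neg a)
  | Dia a => Box (neg a)
  end.

Definition is_dia (f : form) : bool := if f is Dia _ then true else false.

(* countable (hence choice) structure on formulas, to form {fset form} *)
Fixpoint enc_form (f : form) : GenTree.tree nat :=
  match f with
  | Atom n => GenTree.Node 0 [:: GenTree.Leaf n]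
  | NAtom n => GenTree.Node 1 [:: GenTree.Leaf n]
  | And a b => GenTree.Node 2 [:: enc_form a; enc_form b]
  | Or a b => GenTree.Node 3 [:: enc_form a; enc_form b]
  | Box a => GenTree.Node 4 [:: enc_form a]
  | Dia a => GenTree.Node 5 [:: enc_form a]
  end.

Fixpoint dec_form (t : GenTree.tree nat) : option form :=
  match t with
  | GenTree.Node 0 [:: GenTree.Leaf n] => Some (Atom n)
  | GenTree.Node 1 [:: GenTree.Leaf n] => Some (NAtom n)
  | GenTree.Node 2 [:: a; b] =>
      match dec_form a, dec_form b with
      | Some x, Some y => Some (And x y) | _, _ => None end
  | GenTree.Node 3 [:: a; b] =>
      match dec_form a, dec_form b with
      | Some x, Some y => Some (Or x y) | _, _ => None end
  | GenTree.Node 4 [:: a] =>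
      match dec_form a with Some x => Some (Box x) | None => None end
  | GenTree.Node 5 [:: a] =>
      match dec_form a with Some x => Some (Dia x) | None => None end
  | _ => None
  end.

Lemma enc_formK : pcancel enc_form dec_form.
Proof. by elim=> //= [a -> b ->|a -> b ->|a ->|a ->]. Qed.

HB.instance Definition _ := Countable.copy form (pcan_type enc_formK).

(* Annotated sequents.  An item is a formula C that is not a diamond    *)
(* formula, a diamond formula <>A with annotation set Sigma, or a       *)
(* bracket [Delta]_B.  A sequent is a list of items; sequents are taken *)
(* up to exchange via the (deep) exchange rule of [deriv] below.        *)
Inductive item : Type :=
| IForm (C : form) of ~~ is_dia C
| IDia of form & {fset form}
| IBr of list item & form.

Notation sequent := (list item).

(* unary contexts: [Hole G] is  G, {-}  and  [CBr G c B] is  G, [c]_B  *)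
Inductive ctx : Type :=
| Hole of sequent
| CBr of sequent & ctx & form.

Fixpoint fill (c : ctx) (D : sequent) : sequent :=
  match c with
  | Hole G => G ++ D
  | CBr G c' B => G ++ [:: IBr (fill c' D) B]
  end.

Definition fitem (A : form) (S : {fset form}) : item :=
  match A with
  | Atom n => @IForm (Atom n) isT
  | NAtom n => @IForm (NAtom n) isT
  | And a b => @IForm (And a b) isT
  | Or a b => @IForm (Or a b) isT
  | Box a => @IForm (Box a) isT
  | Dia a => IDia a S
  end.

Inductive empty_item : item -> Prop :=
| EForm C p : empty_item (@IForm C p)
| EDia A : empty_item (IDia A fset0)
| EBr D B : empty_list D -> empty_item (IBr D B)
with empty_list : sequent -> Prop :=
| ENil : empty_list [::]
| ECons i D : empty_item i -> empty_list D -> empty_list (i :: D).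

Inductive empty_ctx : ctx -> Prop :=
| EHole G : empty_list G -> empty_ctx (Hole G)
| ECBr G c B : empty_list G -> empty_ctx c -> empty_ctx (CBr G c B).

Inductive merge_item : item -> item -> item -> Prop :=
| MForm C p : merge_item (@IForm C p) (@IForm C p) (@IForm C p)
| MDia A S T : merge_item (IDia A S) (IDia A T) (IDia A (S `|` T))
| MBr D1 D2 D B : merge_list D1 D2 D -> merge_item (IBr D1 B) (IBr D2 B) (IBr D B)
with merge_list : sequent -> sequent -> sequent -> Prop :=
| MNil : merge_list [::] [::] [::]
| MCons i1 i2 i D1 D2 D : merge_item i1 i2 i -> merge_list D1 D2 D ->
    merge_list (i1 :: D1) (i2 :: D2) (i :: D).

Inductive merge_ctx : ctx -> ctx -> ctx -> Prop :=
| MHole G1 G2 G : merge_list G1 G2 G -> merge_ctx (Hole G1) (Hole G2) (Hole G)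
| MCBr G1 G2 G c1 c2 c B : merge_list G1 G2 G -> merge_ctx c1 c2 c ->
    merge_ctx (CBr G1 c1 B) (CBr G2 c2 B) (CBr G c B).

Inductive sim_item : item -> item -> Prop :=
| SForm C p : sim_item (@IForm C p) (@IForm C p)
| SDia A S T : sim_item (IDia A S) (IDia A T)
| SBr D1 D2 B : sim_list D1 D2 -> sim_item (IBr D1 B) (IBr D2 B)
with sim_list : sequent -> sequent -> Prop :=
| SNil : sim_list [::] [::]
| SCons i1 i2 D1 D2 : sim_item i1 i2 -> sim_list D1 D2 ->
    sim_list (i1 :: D1) (i2 :: D2).

Inductive sim_ctx : ctx -> ctx -> Prop :=
| SHole G1 G2 : sim_list G1 G2 -> sim_ctx (Hole G1) (Hole G2)
| SCBr G1 G2 c1 c2 B : sim_list G1 G2 -> sim_ctx c1 c2 ->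
    sim_ctx (CBr G1 c1 B) (CBr G2 c2 B).

(* |-^cf G : derivability with the annotated rules, cuts only on cf.    *)
Inductive deriv (cf : form) : sequent -> Prop :=
| R_exch G D D' :
    deriv cf (fill G D) -> Permutation.Permutation D D' -> deriv cf (fill G D')
| R_id G n :
    empty_ctx G ->
    deriv cf (fill G [:: @IForm (NAtom n) isT; @IForm (Atom n) isT])
| R_and G1 G2 G A B S1 S2 :
    merge_ctx G1 G2 G ->
    deriv cf (fill G1 [:: fitem A S1]) -> deriv cf (fill G2 [:: fitem B S2]) ->
    deriv cf (fill G [:: @IForm (And A B) isT])
| R_or G A B S1 S2 :
    deriv cf (fill G [:: fitem A S1; fitem B S2]) ->
    deriv cf (fill G [:: @IForm (Or A B) isT])
| R_box G A S S' :
    deriv cf (fill G [:: IBr [:: IDia (neg A) S; fitem A S'] A]) ->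
    deriv cf (fill G [:: @IForm (Box A) isT])
| R_dia G D D' A B S S' :
    deriv cf (fill G (rcons (fill D [:: IBr (rcons D' (fitem A S')) B]) (IDia A S))) ->
    deriv cf (fill G (rcons (fill D [:: IBr D' B]) (IDia A (S `|` [fset B]))))
| R_cut G1 G2 G S1 S2 :
    merge_ctx G1 G2 G ->
    deriv cf (fill G1 [:: fitem cf S1]) -> deriv cf (fill G2 [:: fitem (neg cf) S2]) ->
    deriv cf (fill G [::]).

(* Main.v *)
Require Import Defs.
From mathcomp Require Import all_boot finmap.
From Stdlib Require Import Permutation.
Local Open Scope fset_scope.

Lemma cat_app (T : Type) (s1 s2 : seq T) : s1 ++ s2 = List.app s1 s2.
Proof. by elim: s1 => //= x s1 ->. Qed.

Lemma cat_split (T : Type) (l1 l2 m1 m2 : seq T) (a : T) :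
  l1 ++ l2 = m1 ++ a :: m2 ->
  (exists k, l1 = m1 ++ a :: k /\ m2 = k ++ l2) \/
  (exists k, l2 = k ++ a :: m2 /\ m1 = l1 ++ k).
Proof.
elim: l1 m1 => [|x l1 IH] m1 /=.
  by move=> ->; right; exists m1.
case: m1 => [|y m1] /= [<-] E.
  by left; exists l1.
case: (IH _ E) => [[k [-> ->]]|[k [-> ->]]].
  by left; exists k.
by right; exists k.
Qed.

Arguments cat_split {T l1 l2 m1 m2 a}.

Lemma perm_cat (T : Type) (l m : seq T) : Permutation l m -> forall x y : seq T,
  Permutation (x ++ l ++ y) (x ++ m ++ y).
Proof.
move=> H x y; rewrite !cat_app; apply: Permutation_app_head; apply: Permutation_app_tail; done.
Qed.

Inductive Mv (a : form) (T : {fset form}) : sequent -> sequent -> Prop :=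
| Mv_here l r W1 W2 B : Mv a T (l ++ IBr (W1 ++ IDia a T :: W2) B :: r)
                             (l ++ IDia a T :: IBr (W1 ++ W2) B :: r)
| Mv_deep l r W W' B : Mv a T W W' -> Mv a T (l ++ IBr W B :: r) (l ++ IBr W' B :: r).

Inductive RemC (a : form) (T : {fset form}) : ctx -> ctx -> Prop :=
| RemC_hole Y1 Y2 : RemC a T (Hole (Y1 ++ IDia a T :: Y2)) (Hole (Y1 ++ Y2))
| RemC_br Y1 Y2 c B : RemC a T (CBr (Y1 ++ IDia a T :: Y2) c B) (CBr (Y1 ++ Y2) c B).

Inductive MvC (a : form) (T : {fset form}) : ctx -> ctx -> Prop :=
| MvC_hole Y Y' : Mv a T Y Y' -> MvC a T (Hole Y) (Hole Y')
| MvC_sib Y Y' c B : Mv a T Y Y' -> MvC a T (CBr Y c B) (CBr Y' c B)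
| MvC_deep Y c c' B : MvC a T c c' -> MvC a T (CBr Y c B) (CBr Y c' B)
| MvC_path Y c c' B : RemC a T c c' -> MvC a T (CBr Y c B) (CBr (Y ++ [:: IDia a T]) c' B).

Inductive UpC (a : form) (T : {fset form}) : ctx -> ctx -> Prop :=
| UpC_here Y Y' B : UpC a T (CBr Y (Hole Y') B) (CBr (Y ++ [:: IDia a T]) (Hole Y') B)
| UpC_deep Y c c' B : UpC a T c c' -> UpC a T (CBr Y c B) (CBr Y c' B).

Lemma Mv_catr a T Y Y' Z : Mv a T Y Y' -> Mv a T (Y ++ Z) (Y' ++ Z).
Proof.
case=> [l r W1 W2 B|l r W W' B H]; rewrite -!catA /=.
  exact: Mv_here.
exact: Mv_deep.
Qed.

Lemma Mv_catl a T Y Y' Z : Mv a T Y Y' -> Mv a T (Z ++ Y) (Z ++ Y').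
Proof.
case=> [l r W1 W2 B|l r W W' B H]; rewrite !catA.
  exact: Mv_here.
exact: Mv_deep.
Qed.

Lemma Mv_fillctx a T G Y Y' : Mv a T Y Y' -> Mv a T (fill G Y) (fill G Y').
Proof.
move=> H; elim: G => [X|X c IH B] /=.
  exact: Mv_catl.
exact: (Mv_deep _ _ X [::] _ _ _ IH).
Qed.

Lemma RemC_fill a T c c' Z : RemC a T c c' ->
  exists W1 W2, fill c Z = W1 ++ IDia a T :: W2 /\ fill c' Z = W1 ++ W2.
Proof.
case=> [Y1 Y2|Y1 Y2 c0 B] /=.
  by exists Y1, (Y2 ++ Z); rewrite -!catA.
by exists Y1, (Y2 ++ [:: IBr (fill c0 Z) B]); rewrite -!catA.
Qed.

Lemma MvC_fill a T G G' Z : MvC a T G G' -> Mv a T (fill G Z) (fill G' Z).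
Proof.
elim=> [Y Y' H|Y Y' c B H|Y c c' B H IH|Y c c' B H] /=.
- exact: Mv_catr.
- exact: Mv_catr.
- exact: (Mv_deep _ _ Y [::]).
- have [W1 [W2 [-> ->]]] := RemC_fill _ _ _ _ Z H.
  by rewrite -catA /=; apply: (Mv_here _ _ Y [::]).
Qed.

Lemma UpC_fill a T G G' Z1 Z2 : UpC a T G G' ->
  Mv a T (fill G (Z1 ++ IDia a T :: Z2)) (fill G' (Z1 ++ Z2)).
Proof.
elim=> [Y Y' B|Y c c' B H IH] /=.
  rewrite -catA /= !catA; exact: (Mv_here _ _ Y [::]).
exact: (Mv_deep _ _ Y [::]).
Qed.

Lemma Mv_cat_inv a T Y P t : Mv a T (Y ++ P) t ->
  (exists Y', Mv a T Y Y' /\ t = Y' ++ P) \/ (exists P', Mv a T P P' /\ t = Y ++ P').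
Proof.
move E: (Y ++ P) => s H; case: H E => [l r W1 W2 B|l r W W' B H] E.
  case: (cat_split E) => [[k [-> ->]]|[k [-> ->]]].
    by left; eexists; split; first exact: (Mv_here _ _ l k); rewrite -catA.
  by right; eexists; split; first exact: (Mv_here _ _ k r); rewrite -catA.
case: (cat_split E) => [[k [-> ->]]|[k [-> ->]]].
  by left; eexists; split; first exact: (Mv_deep _ _ l k _ _ _ H); rewrite -catA.
by right; eexists; split; first exact: (Mv_deep _ _ k r _ _ _ H); rewrite -catA.
Qed.
Lemma single_eq_inv (l r : seq item) x y : l ++ x :: r = [:: y] -> l = [::] /\ r = [::] /\ x = y.
Proof. by case: l => [|? [|? ?]] //= [-> ->]. Qed.

Lemma Mv_fill_inv a T G P t : Mv a T (fill G P) t ->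
  (exists G', MvC a T G G' /\ t = fill G' P) \/
  (exists P', Mv a T P P' /\ t = fill G P') \/
  (exists G' P1 P2, UpC a T G G' /\ P = P1 ++ IDia a T :: P2 /\ t = fill G' (P1 ++ P2)).
Proof.
elim: G t => [Y|Y c IH B] t /= H.
- case: (Mv_cat_inv _ _ _ _ _ H) => [[Y' [HY ->]]|[P' [HP ->]]].
  + left; exists (Hole Y'); split => //; exact: MvC_hole.
  + by right; left; exists P'.
- case: (Mv_cat_inv _ _ _ _ _ H) => [[Y' [HY ->]]|[P0 [HP ->]]].
  + left; exists (CBr Y' c B); split => //; exact: MvC_sib.
  + move E: [:: IBr (fill c P) B] HP => s HP; case: HP E => [l r W1 W2 B'|l r W W' B' HW] E.
    * have [-> [-> E1]] := single_eq_inv _ _ _ _ (esym E).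
      case: E1 => E1 ->; move: E1 => /esym E1 /=.
      clear H E; case: c IH E1 => [Y''|Y'' c0 B0] _ /= E1.
      -- case: (cat_split E1) => [[k [-> ->]]|[k [-> ->]]].
         ++ left; exists (CBr (Y ++ [:: IDia a T]) (Hole (W1 ++ k)) B); split.
              exact: MvC_path (RemC_hole _ _ _ _).
            by rewrite /= -!catA.
         ++ right; right; exists (CBr (Y ++ [:: IDia a T]) (Hole Y'') B), k, W2.
            split; first exact: UpC_here.
            by rewrite /= -!catA.
      -- case: (cat_split E1) => [[k [-> ->]]|[k [E2 _]]].
         ++ left; exists (CBr (Y ++ [:: IDia a T]) (CBr (W1 ++ k) c0 B0) B); split.
              exact: MvC_path (RemC_br _ _ _ _ _ _).
            by rewrite /= -!catA.
         ++ by have [_ [_ ]] := single_eq_inv _ _ _ _ (esym E2).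
    * have [-> [-> E1]] := single_eq_inv _ _ _ _ (esym E).
      case: E1 => ? ?; subst.
      case: (IH _ HW) => [[c' [Hc ->]]|[[P' [HP ->]]|[c' [P1 [P2 [Hc [-> ->]]]]]]].
      -- by left; exists (CBr Y c' B); split => //; exact: MvC_deep.
      -- by right; left; exists P'.
      -- right; right; exists (CBr Y c' B), P1, P2; split => //; exact: UpC_deep.
Qed.
Lemma ml_nil_inv M1 M2 : merge_list M1 M2 [::] -> M1 = [::] /\ M2 = [::].
Proof. by move=> H; inversion H. Qed.

Lemma ml_cons_inv M1 M2 i D : merge_list M1 M2 (i :: D) ->
  exists i1 D1 i2 D2, M1 = i1 :: D1 /\ M2 = i2 :: D2 /\ merge_item i1 i2 i /\ merge_list D1 D2 D.
Proof. move=> H; inversion H; subst; by do 4 eexists; eauto. Qed.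

Lemma mi_br_inv i1 i2 D B : merge_item i1 i2 (IBr D B) ->
  exists D1 D2, i1 = IBr D1 B /\ i2 = IBr D2 B /\ merge_list D1 D2 D.
Proof. move=> H; inversion H; subst; by do 2 eexists; eauto. Qed.

Lemma mi_dia_inv i1 i2 a T : merge_item i1 i2 (IDia a T) ->
  exists T1 T2, i1 = IDia a T1 /\ i2 = IDia a T2 /\ T = T1 `|` T2.
Proof. move=> H; inversion H; subst; by do 2 eexists; eauto. Qed.

Lemma ml_cat_inv M1 M2 l r : merge_list M1 M2 (l ++ r) ->
  exists l1 r1 l2 r2, M1 = l1 ++ r1 /\ M2 = l2 ++ r2 /\ merge_list l1 l2 l /\ merge_list r1 r2 r.
Proof.
elim: l M1 M2 => [|x l IH] M1 M2 /= H.
  by exists [::], M1, [::], M2; split; [|split; [|split; [exact: MNil|]]].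
have [i1 [D1 [i2 [D2 [-> [-> [Hi HD]]]]]]] := ml_cons_inv _ _ _ _ H.
have [l1 [r1 [l2 [r2 [-> [-> [H1 H2]]]]]]] := IH _ _ HD.
by exists (i1 :: l1), r1, (i2 :: l2), r2; split; [|split; [|split; [exact: MCons|]]].
Qed.

Lemma ml_cat l1 l2 l r1 r2 r : merge_list l1 l2 l -> merge_list r1 r2 r ->
  merge_list (l1 ++ r1) (l2 ++ r2) (l ++ r).
Proof. by elim=> //= i1 i2 i D1 D2 D Hi _ IH Hr; apply: MCons => //; apply: IH. Qed.

Lemma Mv_merge a T M M' : Mv a T M M' -> forall M1 M2, merge_list M1 M2 M ->
  exists T1 T2 M1' M2', T = T1 `|` T2 /\ Mv a T1 M1 M1' /\ Mv a T2 M2 M2' /\ merge_list M1' M2' M'.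
Proof.
elim=> [l r W1 W2 B|l r W W' B HW IH] M1 M2 H.
- have [l1 [r1 [l2 [r2 [-> [-> [Hl Hr]]]]]]] := ml_cat_inv _ _ _ _ H.
  have [x1 [r1' [x2 [r2' [-> [-> [Hx Hr']]]]]]] := ml_cons_inv _ _ _ _ Hr.
  have [V1 [V2 [-> [-> HV]]]] := mi_br_inv _ _ _ _ Hx.
  have [u1 [v1 [u2 [v2 [-> [-> [Hu Hv]]]]]]] := ml_cat_inv _ _ _ _ HV.
  have [y1 [v1' [y2 [v2' [-> [-> [Hy Hv']]]]]]] := ml_cons_inv _ _ _ _ Hv.
  have [T1 [T2 [-> [-> ->]]]] := mi_dia_inv _ _ _ _ Hy.
  exists T1, T2, (l1 ++ IDia a T1 :: IBr (u1 ++ v1') B :: r1'),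
    (l2 ++ IDia a T2 :: IBr (u2 ++ v2') B :: r2').
  split=> //; split; first exact: Mv_here.
  split; first exact: Mv_here.
  apply: ml_cat => //; apply: MCons; first exact: MDia.
  apply: MCons => //; apply: MBr; exact: ml_cat.
- have [l1 [r1 [l2 [r2 [-> [-> [Hl Hr]]]]]]] := ml_cat_inv _ _ _ _ H.
  have [x1 [r1' [x2 [r2' [-> [-> [Hx Hr']]]]]]] := ml_cons_inv _ _ _ _ Hr.
  have [V1 [V2 [-> [-> HV]]]] := mi_br_inv _ _ _ _ Hx.
  have [T1 [T2 [V1' [V2' [-> [H1 [H2 H3]]]]]]] := IH _ _ HV.
  exists T1, T2, (l1 ++ IBr V1' B :: r1'), (l2 ++ IBr V2' B :: r2').
  split=> //; split; first exact: Mv_deep.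
  split; first exact: Mv_deep.
  apply: ml_cat => //; apply: MCons => //; exact: MBr.
Qed.

Lemma mc_hole_inv G1 G2 Y : merge_ctx G1 G2 (Hole Y) ->
  exists Y1 Y2, G1 = Hole Y1 /\ G2 = Hole Y2 /\ merge_list Y1 Y2 Y.
Proof. move=> H; inversion H; subst; by do 2 eexists; eauto. Qed.

Lemma mc_br_inv G1 G2 Y c B : merge_ctx G1 G2 (CBr Y c B) ->
  exists Y1 Y2 c1 c2, G1 = CBr Y1 c1 B /\ G2 = CBr Y2 c2 B /\ merge_list Y1 Y2 Y /\ merge_ctx c1 c2 c.
Proof. move=> H; inversion H; subst; by do 4 eexists; eauto. Qed.

Lemma RemC_merge a T c c' : RemC a T c c' -> forall c1 c2, merge_ctx c1 c2 c ->
  exists T1 T2 c1' c2', T = T1 `|` T2 /\ RemC a T1 c1 c1' /\ RemC a T2 c2 c2' /\ merge_ctx c1' c2' c'.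
Proof.
case=> [Y1 Y2|Y1 Y2 c0 B] c1 c2 H.
- have [Z1 [Z2 [-> [-> H2]]]] := mc_hole_inv _ _ _ H.
  have [u1 [v1 [u2 [v2 [-> [-> [Hu Hv]]]]]]] := ml_cat_inv _ _ _ _ H2.
  have [y1 [v1' [y2 [v2' [-> [-> [Hy Hv']]]]]]] := ml_cons_inv _ _ _ _ Hv.
  have [T1 [T2 [-> [-> ->]]]] := mi_dia_inv _ _ _ _ Hy.
  exists T1, T2, (Hole (u1 ++ v1')), (Hole (u2 ++ v2')).
  split=> //; split; first exact: RemC_hole.
  split; first exact: RemC_hole.
  by apply: MHole; apply: ml_cat.
- have [Z1 [Z2 [c3 [c4 [-> [-> [H3 H4]]]]]]] := mc_br_inv _ _ _ _ _ H.
  have [u1 [v1 [u2 [v2 [-> [-> [Hu Hv]]]]]]] := ml_cat_inv _ _ _ _ H3.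
  have [y1 [v1' [y2 [v2' [-> [-> [Hy Hv']]]]]]] := ml_cons_inv _ _ _ _ Hv.
  have [T1 [T2 [-> [-> ->]]]] := mi_dia_inv _ _ _ _ Hy.
  exists T1, T2, (CBr (u1 ++ v1') c3 B), (CBr (u2 ++ v2') c4 B).
  split=> //; split; first exact: RemC_br.
  split; first exact: RemC_br.
  by apply: MCBr => //; apply: ml_cat.
Qed.

Lemma MvC_merge a T G G' : MvC a T G G' -> forall G1 G2, merge_ctx G1 G2 G ->
  exists T1 T2 G1' G2', T = T1 `|` T2 /\ MvC a T1 G1 G1' /\ MvC a T2 G2 G2' /\ merge_ctx G1' G2' G'.
Proof.
elim=> [Y Y' HY|Y Y' c B HY|Y c c' B Hc IH|Y c c' B Hc] G1 G2 H.
- have [Z1 [Z2 [-> [-> H2]]]] := mc_hole_inv _ _ _ H.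
  have [T1 [T2 [Y1' [Y2' [-> [H1 [H6 H3]]]]]]] := Mv_merge _ _ _ _ HY _ _ H2.
  exists T1, T2, (Hole Y1'), (Hole Y2'); do 3 (split; first by constructor).
  by constructor.
- have [G0 [G3 [c1 [c2 [-> [-> [H3 H5]]]]]]] := mc_br_inv _ _ _ _ _ H.
  have [T1 [T2 [Y1' [Y2' [-> [H1 [H2 H4]]]]]]] := Mv_merge _ _ _ _ HY _ _ H3.
  exists T1, T2, (CBr Y1' c1 B), (CBr Y2' c2 B); do 3 (split; first by constructor).
  by constructor.
- have [G0 [G3 [c1 [c2 [-> [-> [H3 H5]]]]]]] := mc_br_inv _ _ _ _ _ H.
  have [T1 [T2 [c1' [c2' [-> [H1 [H2 H4]]]]]]] := IH _ _ H5.
  exists T1, T2, (CBr G0 c1' B), (CBr G3 c2' B); do 3 (split; first by constructor).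
  by constructor.
- have [G0 [G3 [c1 [c2 [-> [-> [H3 H5]]]]]]] := mc_br_inv _ _ _ _ _ H.
  have [T1 [T2 [c1' [c2' [-> [H1 [H2 H4]]]]]]] := RemC_merge _ _ _ _ Hc _ _ H5.
  exists T1, T2, (CBr (G0 ++ [:: IDia a T1]) c1' B), (CBr (G3 ++ [:: IDia a T2]) c2' B).
  do 3 (split; first by constructor).
  constructor => //; apply: ml_cat => //; apply: MCons; [exact: MDia|exact: MNil].
Qed.

Lemma el_cat l r : empty_list l -> empty_list r -> empty_list (l ++ r).
Proof. by elim=> //= i D Hi _ IH Hr; apply: ECons => //; apply: IH. Qed.

Lemma el_cons_inv i D : empty_list (i :: D) -> empty_item i /\ empty_list D.
Proof. by move=> H; inversion H. Qed.

Lemma el_cat_inv l r : empty_list (l ++ r) -> empty_list l /\ empty_list r.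
Proof.
elim: l => [|x l IH] /= H; first by split => //; exact: ENil.
have [Hx Hl] := el_cons_inv _ _ H; have [H1 H2] := IH Hl; split => //; exact: ECons.
Qed.

Lemma ei_br_inv D B : empty_item (IBr D B) -> empty_list D.
Proof. by move=> H; inversion H. Qed.

Lemma Mv_empty a T M M' : Mv a T M M' -> empty_list M -> empty_list M'.
Proof.
elim=> [l r W1 W2 B|l r W W' B HW IH] H.
- have [Hl /el_cons_inv [/ei_br_inv Hb Hr]] := el_cat_inv _ _ H.
  have [Hw1 /el_cons_inv [Hd Hw2]] := el_cat_inv _ _ Hb.
  apply: el_cat => //; apply: ECons => //; apply: ECons => //.
  by apply: EBr; apply: el_cat.
- have [Hl /el_cons_inv [/ei_br_inv Hb Hr]] := el_cat_inv _ _ H.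
  apply: el_cat => //; apply: ECons => //; apply: EBr; exact: IH.
Qed.

Lemma ec_hole_inv Y : empty_ctx (Hole Y) -> empty_list Y.
Proof. by move=> H; inversion H. Qed.

Lemma ec_br_inv Y c B : empty_ctx (CBr Y c B) -> empty_list Y /\ empty_ctx c.
Proof. by move=> H; inversion H. Qed.

Lemma MvC_empty a T G G' : MvC a T G G' -> empty_ctx G -> empty_ctx G'.
Proof.
elim=> [Y Y' HY|Y Y' c B HY|Y c c' B Hc IH|Y c c' B Hc] H.
- constructor; exact: (Mv_empty _ _ _ _ HY (ec_hole_inv _ H)).
- have [H2 H4] := ec_br_inv _ _ _ H; constructor => //; exact: (Mv_empty _ _ _ _ HY).
- have [H2 H4] := ec_br_inv _ _ _ H; constructor => //; exact: IH.
- have [H2 H4] := ec_br_inv _ _ _ H.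
  case: Hc H4 => [Y1 Y2|Y1 Y2 c0 B'] H4.
  + have [Hw1 /el_cons_inv [Hd Hw2]] := el_cat_inv _ _ (ec_hole_inv _ H4).
    constructor; first by apply: el_cat => //; apply: ECons => //; exact: ENil.
    constructor; exact: el_cat.
  + have [H3 H5] := ec_br_inv _ _ _ H4.
    have [Hw1 /el_cons_inv [Hd Hw2]] := el_cat_inv _ _ H3.
    constructor; first by apply: el_cat => //; apply: ECons => //; exact: ENil.
    constructor => //; exact: el_cat.
Qed.
Definition preL (Y : sequent) (c : ctx) : ctx :=
  match c with Hole Y0 => Hole (Y ++ Y0) | CBr Y0 c0 B => CBr (Y ++ Y0) c0 B end.

Lemma fill_preL Y c X : fill (preL Y c) X = Y ++ fill c X.
Proof. by case: c => [Y0|Y0 c0 B] /=; rewrite catA. Qed.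

Fixpoint addH (c : ctx) (L : sequent) : ctx :=
  match c with Hole Y => Hole (Y ++ L) | CBr Y c0 B => CBr Y (addH c0 L) B end.

Lemma fill_addH c L M : fill (addH c L) M = fill c (L ++ M).
Proof. by elim: c => [Y|Y c IH B] /=; [rewrite catA|rewrite IH]. Qed.

Fixpoint comp (K c : ctx) : ctx :=
  match K with Hole Y => preL Y c | CBr Y k B => CBr Y (comp k c) B end.

Lemma fill_comp K c X : fill (comp K c) X = fill K (fill c X).
Proof. by elim: K => [Y|Y k IH B] /=; [rewrite fill_preL|rewrite IH]. Qed.

Lemma perm_swap_end (Y : sequent) x y : Permutation ((Y ++ [:: x]) ++ [:: y]) ((Y ++ [:: y]) ++ [:: x]).
Proof.
rewrite -!catA /= !cat_app; apply: Permutation_app_head; exact: perm_swap.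
Qed.

Lemma perm_ins (l0 r0 l r : sequent) u : Permutation (l0 ++ r0) (l ++ r) ->
  Permutation (l0 ++ u :: r0) (l ++ u :: r).
Proof.
rewrite !cat_app => H.
apply: Permutation_trans; first by apply: Permutation_sym; apply: Permutation_middle.
apply: Permutation_trans; last by apply: Permutation_middle.
by apply: perm_skip.
Qed.

Lemma UpC_inv a T Y c B G2 : UpC a T (CBr Y c B) G2 ->
  (exists Y', c = Hole Y' /\ G2 = CBr (Y ++ [:: IDia a T]) (Hole Y') B) \/
  (exists c', UpC a T c c' /\ G2 = CBr Y c' B).
Proof. move=> H; inversion H; subst; [left|right]; eauto. Qed.

Lemma UpC_hole a T Y G2 : UpC a T (Hole Y) G2 -> False.
Proof. by move=> H; inversion H. Qed.

Lemma UpC_chg a T T' G G' : UpC a T G G' -> exists G'', UpC a T' G G''.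
Proof.
elim=> [Y Y' B|Y c c' B _ [c'' H]].
  by eexists; exact: UpC_here.
by eexists; exact: UpC_deep H.
Qed.

Lemma dia_up cf A S S' B D D' G G1 : UpC A S G G1 -> forall G2 K,
  UpC A (S `|` [fset B]) G G2 ->
  deriv cf (fill K (fill G1 (fill D [:: IBr (rcons D' (fitem A S')) B]))) ->
  deriv cf (fill K (fill G2 (fill D [:: IBr D' B]))).
Proof.
elim=> [Y Y' B0|Y c c' B0 Hc IH] G2 K H2 Hd.
- case: (UpC_inv _ _ _ _ _ _ H2) => [[Y'' [[<-] ->]]|[c'' [Hc _]]]; last first.
    by case: (UpC_hole _ _ _ _ Hc).
  move: Hd => /= Hd.
  have Hd2 : deriv cf (fill K (rcons (fill (CBr Y (preL Y' D) B0)
      [:: IBr (rcons D' (fitem A S')) B]) (IDia A S))).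
    rewrite /= fill_preL -[rcons (Y ++ _) _]cats1.
    exact: (R_exch Hd (perm_swap_end _ _ _)).
  have Hd3 := R_dia Hd2.
  move: Hd3; rewrite /= fill_preL -[rcons (Y ++ _) _]cats1 => Hd3.
  exact: (R_exch Hd3 (perm_swap_end _ _ _)).
- case: (UpC_inv _ _ _ _ _ _ H2) => [[Y'' [E _]]|[c'' [Hc2 ->]]].
    by subst c; case: (UpC_hole _ _ _ _ Hc).
  move: Hd => /=.
  have E : forall k Z, fill K (Y ++ [:: IBr (fill k Z) B0]) = fill (comp K (CBr Y (Hole [::]) B0)) (fill k Z).
    by move=> k Z; rewrite fill_comp.
  rewrite !E => Hd; exact: IH.
Qed.
Lemma Mv_hasbr a T P P' : Mv a T P P' -> exists l W B r, P = l ++ IBr W B :: r.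
Proof. by case=> [l r W1 W2 B|l r W W' B _]; do 4 eexists. Qed.

Lemma Mv_nil a T P' : Mv a T [::] P' -> False.
Proof. by move/Mv_hasbr => [[|? ?] [W [B [r]]]]. Qed.

Lemma Mv_form1 a T C p P' : Mv a T [:: @IForm C p] P' -> False.
Proof. by move/Mv_hasbr => [[|? [|? ?]] [W [B [r]]]]. Qed.

Lemma Mv_form2 a T C p C' p' P' : Mv a T [:: @IForm C p; @IForm C' p'] P' -> False.
Proof. by move/Mv_hasbr => [[|? [|? [|? ?]]] [W [B [r]]]]. Qed.

Lemma Mv_dia1 a T A S P' : Mv a T [:: IDia A S] P' -> False.
Proof. by move/Mv_hasbr => [[|? [|? ?]] [W [B [r]]]]. Qed.

Lemma nodia1 a T C p (P1 P2 : sequent) : [:: @IForm C p] = P1 ++ IDia a T :: P2 -> False.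
Proof. by case: P1 => [|? [|? ?]]. Qed.

Lemma nodia2 a T C p C' p' (P1 P2 : sequent) :
  [:: @IForm C p; @IForm C' p'] = P1 ++ IDia a T :: P2 -> False.
Proof. by case: P1 => [|? [|? [|? ?]]]. Qed.

Lemma nodia0 a T (P1 P2 : sequent) : [::] = P1 ++ IDia a T :: P2 -> False.
Proof. by case: P1. Qed.

Lemma nodiabr a T W B (P1 P2 : sequent) : [:: IBr W B] = P1 ++ IDia a T :: P2 -> False.
Proof. by case: P1 => [|? [|? ?]]. Qed.

Lemma Mv_rcons a T X X' e : Mv a T X X' -> Mv a T (rcons X e) (rcons X' e).
Proof. by rewrite -!cats1; apply: Mv_catr. Qed.

Lemma Mv_rcons_inv a T X A S P' : Mv a T (rcons X (IDia A S)) P' ->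
  exists X', Mv a T X X' /\ P' = rcons X' (IDia A S).
Proof.
rewrite -cats1 => H; case: (Mv_cat_inv _ _ _ _ _ H) => [[X' [HX ->]]|[P0 [HP _]]].
  by exists X'; rewrite cats1.
by case: (Mv_dia1 _ _ _ _ _ HP).
Qed.

Lemma Mv_single_br a T W B P0 : Mv a T [:: IBr W B] P0 ->
  (exists W1 W2, W = W1 ++ IDia a T :: W2 /\ P0 = [:: IDia a T; IBr (W1 ++ W2) B]) \/
  (exists W', Mv a T W W' /\ P0 = [:: IBr W' B]).
Proof.
move=> H0; move E: [:: IBr W B] H0 => s H; case: H E => [l r W1 W2 B'|l r W0 W' B' HW] E.
- have [-> [-> E1]] := single_eq_inv _ _ _ _ (esym E).
  case: E1 => <- <-; left; by exists W1, W2.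
- have [-> [-> E1]] := single_eq_inv _ _ _ _ (esym E).
  case: E1 => <- <-; right; by exists W'.
Qed.

Lemma fill_top_inv a T D X P1 P2 : (forall Q1 Q2, X = Q1 ++ IDia a T :: Q2 -> False) ->
  fill D X = P1 ++ IDia a T :: P2 ->
  exists Dm, RemC a T D Dm /\ fill Dm X = P1 ++ P2.
Proof.
move=> HX; case: D => [Y|Y c B] /= E.
- case: (cat_split E) => [[k [-> ->]]|[k [E2 _]]]; last by case: (HX _ _ E2).
  by exists (Hole (P1 ++ k)); split; [exact: RemC_hole|rewrite /= -catA].
- case: (cat_split E) => [[k [-> ->]]|[k [E2 _]]].
    by exists (CBr (P1 ++ k) c B); split; [exact: RemC_br|rewrite /= -catA].
  by case: (nodiabr _ _ _ _ _ _ E2).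
Qed.

Lemma Mv_perm a T D D' P' : Permutation D D' -> Mv a T D' P' ->
  exists D0, Mv a T D D0 /\ Permutation D0 P'.
Proof.
move=> Hp H; case: H Hp => [l r W1 W2 B|l r W W' B HW] Hp.
- move: (Hp); rewrite cat_app => /(Permutation_vs_elt_inv _ _ _) [l0 [r0 E]].
  rewrite -cat_app in E; subst D.
  have Hp2 : Permutation (l0 ++ r0) (l ++ r).
    by move: Hp; rewrite !cat_app => /(Permutation_app_inv _ _ _ _ _); rewrite -!cat_app.
  exists (l0 ++ IDia a T :: IBr (W1 ++ W2) B :: r0); split; first exact: Mv_here.
  by apply: perm_ins; apply: (perm_ins _ _ _ _ _ Hp2).
- move: (Hp); rewrite cat_app => /(Permutation_vs_elt_inv _ _ _) [l0 [r0 E]].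
  rewrite -cat_app in E; subst D.
  have Hp2 : Permutation (l0 ++ r0) (l ++ r).
    by move: Hp; rewrite !cat_app => /(Permutation_app_inv _ _ _ _ _); rewrite -!cat_app.
  exists (l0 ++ IBr W' B :: r0); split; first exact: Mv_deep.
  exact: perm_ins.
Qed.

Lemma perm_elt_inv (D P1 P2 : sequent) x : Permutation D (P1 ++ x :: P2) ->
  exists Q1 Q2, D = Q1 ++ x :: Q2 /\ Permutation (Q1 ++ Q2) (P1 ++ P2).
Proof.
move=> Hp; move: (Hp); rewrite cat_app => /(Permutation_vs_elt_inv _ _ _) [l0 [r0 E]].
rewrite -cat_app in E; subst D; exists l0, r0; split => //.
by move: Hp; rewrite !cat_app => /(Permutation_app_inv _ _ _ _ _); rewrite -!cat_app.
Qed.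
Lemma main cf s : deriv cf s -> forall a T t, Mv a T s t -> deriv cf t.
Proof.
elim=> {s}
  [G D D' Hd IH Hp|G n He|G1 G2 G A B S1 S2 Hm H1 IH1 H2 IH2|G A B S1 S2 H IH
  |G A S S' H IH|G D D' A B S S' H IH|G1 G2 G S1 S2 Hm H1 IH1 H2 IH2] a T t Hmv.
-
  case: (Mv_fill_inv _ _ _ _ _ Hmv) => [[G' [HG ->]]|[[P' [HP ->]]|[G' [P1 [P2 [HU [E ->]]]]]]].
  + exact: (R_exch (IH _ _ _ (MvC_fill _ _ _ _ _ HG)) Hp).
  + have [D0 [HD HD0]] := Mv_perm _ _ _ _ _ Hp HP.
    exact: (R_exch (IH _ _ _ (Mv_fillctx _ _ _ _ _ HD)) HD0).
  + subst D'; have [Q1 [Q2 [ED HQ]]] := perm_elt_inv _ _ _ _ Hp; subst D.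
    exact: (R_exch (IH _ _ _ (UpC_fill _ _ _ _ _ _ HU)) HQ).
-
  case: (Mv_fill_inv _ _ _ _ _ Hmv) => [[G' [HG ->]]|[[P' [HP ->]]|[G' [P1 [P2 [HU [E ->]]]]]]].
  + exact: (R_id _ _ (MvC_empty _ _ _ _ HG He)).
  + by case: (Mv_form2 _ _ _ _ _ _ _ HP).
  + by case: (nodia2 _ _ _ _ _ _ _ _ E).
-
  case: (Mv_fill_inv _ _ _ _ _ Hmv) => [[G' [HG ->]]|[[P' [HP ->]]|[G' [P1 [P2 [HU [E ->]]]]]]].
  + have [T1 [T2 [G1' [G2' [_ [HG1 [HG2 Hm']]]]]]] := MvC_merge _ _ _ _ HG _ _ Hm.
    exact: (R_and Hm' (IH1 _ _ _ (MvC_fill _ _ _ _ _ HG1)) (IH2 _ _ _ (MvC_fill _ _ _ _ _ HG2))).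
  + by case: (Mv_form1 _ _ _ _ _ HP).
  + by case: (nodia1 _ _ _ _ _ _ E).
-
  case: (Mv_fill_inv _ _ _ _ _ Hmv) => [[G' [HG ->]]|[[P' [HP ->]]|[G' [P1 [P2 [HU [E ->]]]]]]].
  + exact: (R_or (IH _ _ _ (MvC_fill _ _ _ _ _ HG))).
  + by case: (Mv_form1 _ _ _ _ _ HP).
  + by case: (nodia1 _ _ _ _ _ _ E).
-
  case: (Mv_fill_inv _ _ _ _ _ Hmv) => [[G' [HG ->]]|[[P' [HP ->]]|[G' [P1 [P2 [HU [E ->]]]]]]].
  + exact: (R_box (IH _ _ _ (MvC_fill _ _ _ _ _ HG))).
  + by case: (Mv_form1 _ _ _ _ _ HP).
  + by case: (nodia1 _ _ _ _ _ _ E).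
-
  case: (Mv_fill_inv _ _ _ _ _ Hmv) => [[G' [HG ->]]|[[P' [HP ->]]|[G' [P1 [P2 [HU [E ->]]]]]]].
  + exact: (R_dia (IH _ _ _ (MvC_fill _ _ _ _ _ HG))).
  + have [X' [HX ->]] := Mv_rcons_inv _ _ _ _ _ _ HP.
    case: (Mv_fill_inv _ _ _ _ _ HX) => [[D2 [HD ->]]|[[P0 [HP0 ->]]|[D2 [Q1 [Q2 [_ [E _]]]]]]].
    * apply: (R_dia (S' := S')); apply: (IH a T); apply: Mv_fillctx; apply: Mv_rcons; exact: MvC_fill.
    * case: (Mv_single_br _ _ _ _ _ HP0) => [[W1 [W2 [ED ->]]]|[W' [HW ->]]]; first subst D'.
      -- have -> : [:: IDia a T; IBr (W1 ++ W2) B] = [:: IDia a T] ++ [:: IBr (W1 ++ W2) B] by [].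
         rewrite -fill_addH; apply: (R_dia (S' := S')); apply: (IH a T).
         rewrite fill_addH !rcons_cat /=.
         apply: Mv_fillctx; apply: Mv_rcons; apply: Mv_fillctx.
         exact: (Mv_here _ _ [::] [::]).
      -- apply: (R_dia (S' := S')); apply: (IH a T); apply: Mv_fillctx; apply: Mv_rcons; apply: Mv_fillctx.
         apply: (Mv_deep _ _ [::] [::]); exact: Mv_rcons.
    * by case: (nodiabr _ _ _ _ _ _ E).
  + case/lastP: P2 E => [|P2' y] E.
    * rewrite cats1 in E; case/rcons_inj: E => EX Ed; case: Ed => EA ET; subst a T; case: EX => EX; subst P1.
      rewrite cats0.
      have [G1 HG1] := UpC_chg _ _ S _ _ HU.
      apply: (dia_up _ _ _ S' _ _ _ _ _ HG1 _ (Hole [::]) HU) => /=.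
      apply: (IH A S).
      have := UpC_fill _ _ _ _ (fill D [:: IBr (rcons D' (fitem A S')) B]) [::] HG1.
      by rewrite cats0 cats1.
    * rewrite -rcons_cons -rcons_cat in E; case/rcons_inj: E => EX <-.
      have [Dm [HDm EDm]] := fill_top_inv _ _ _ _ _ _ (nodiabr _ _ _ _) EX.
      rewrite -rcons_cat -EDm; apply: (R_dia (S' := S')); apply: (IH a T).
      have [W1 [W2 [-> ->]]] := RemC_fill _ _ _ _ [:: IBr (rcons D' (fitem A S')) B] HDm.
      rewrite rcons_cat /= rcons_cat; exact: UpC_fill.
-
  case: (Mv_fill_inv _ _ _ _ _ Hmv) => [[G' [HG ->]]|[[P' [HP ->]]|[G' [P1 [P2 [HU [E ->]]]]]]].
  + have [T1 [T2 [G1' [G2' [_ [HG1 [HG2 Hm']]]]]]] := MvC_merge _ _ _ _ HG _ _ Hm.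
    exact: (R_cut Hm' (IH1 _ _ _ (MvC_fill _ _ _ _ _ HG1)) (IH2 _ _ _ (MvC_fill _ _ _ _ _ HG2))).
  + by case: (Mv_nil _ _ _ HP).
  + by case: (nodia0 _ _ _ _ E).
Qed.
Lemma push cf a T D : forall G, deriv cf (fill G (fill D [:: IDia a T])) ->
  deriv cf (fill G (rcons (fill D [::]) (IDia a T))).
Proof.
elim: D => [X|X c IH B] G /= H.
  by rewrite cats0 -cats1.
have E : forall Z, fill G (X ++ [:: IBr Z B]) = fill (comp G (CBr X (Hole [::]) B)) Z.
  by move=> Z; rewrite fill_comp.
rewrite E in H; have H1 := IH _ H; rewrite -E in H1.
have H2 := main _ _ H1 a T (fill G (X ++ IDia a T :: IBr (fill c [::] ++ [::]) B :: [::])).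
have H3 : deriv cf (fill G (X ++ IDia a T :: IBr (fill c [::] ++ [::]) B :: [::])).
  apply: H2; apply: Mv_fillctx; rewrite -cats1; exact: (Mv_here _ _ X [::]).
rewrite cats0 in H3.
apply: (R_exch H3); rewrite -!cats1 -catA /= !cat_app.
apply: Permutation_app_head; exact: perm_swap.
Qed.

Fixpoint sim_item_refl (i : item) : sim_item i i :=
  match i with
  | @IForm C p => @SForm C p
  | IDia A0 S0 => SDia A0 S0 S0
  | IBr D B => @SBr D D B ((fix f (l : sequent) : sim_list l l :=
       match l with [::] => SNil | x :: l' => SCons (sim_item_refl x) (f l') end) D)
  end.

Lemma sim_list_refl (l : sequent) : sim_list l l.
Proof. by elim: l => [|x l IH]; [exact: SNil|exact: SCons (sim_item_refl x) IH]. Qed.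

Lemma sim_ctx_refl (c : ctx) : sim_ctx c c.
Proof.
elim: c => [Y|Y c IH B]; [exact: SHole (sim_list_refl Y)|exact: SCBr (sim_list_refl Y) IH].
Qed.

Theorem mainTheorem5 (A : form) (G D : ctx) (S : {fset form}) :
  deriv A (fill G (fill D [:: IDia (neg A) S])) ->
  exists G' D', sim_ctx G G' /\ sim_ctx D D' /\
    deriv A (fill G' (rcons (fill D' [::]) (IDia (neg A) S))).
Proof.
move=> H; exists G, D; split; first exact: sim_ctx_refl.
split; first exact: sim_ctx_refl.
exact: push.
Qed.
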